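(* Let $\mathcal{S},\mathcal{T}\subset\mathbb{P}$ be nonempty subsets which are each totally ordered with respect to the Loewner order, and suppose $\mathcal{S}$ has a maximum element $M$ and $\mathcal{T}$ has a maximum element $N$. Then $$M\# N=\max\Big\{X\in\mathbb{H}:\ \begin{pmatrix}A & X\\ X & B\end{pmatrix}\geq 0 \text{ for some } A\in\mathcal{S},\ B\in\mathcal{T}\Big\},$$ where the maximum is taken with respect to the Loewner order.
   Context: $\mathbb{H}$ denotes the real vector space of $n\times n$ complex Hermitian matrices and $\mathbb{P}\subset\mathbb{H}$ the open cone of positive definite matrices. The Loewner order: $A\leq B$ iff $B-A$ is positive semidefinite. For $A,B\in\mathbb{P}$ and $t\in[0,1]$, $A\#_t B:=A^{1/2}(A^{-1/2}BA^{-1/2})^tA^{1/2}$ and $A\# B:=A\#_{1/2}B$. *)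

(* Defs.v *)
From HB Require Import structures.
From mathcomp Require Import all_boot all_order all_algebra.
From mathcomp Require Import sesquilinear spectral complex reals.
From Stdlib Require Import ClassicalEpsilon.
Set Implicit Arguments. Unset Strict Implicit. Unset Printing Implicit Defensive.
Import Order.TTheory GRing.Theory Num.Theory.
Local Open Scope ring_scope.
Local Open Scope sesquilinear_scope.

Section Defs.
Variable C : numClosedFieldType.

Definition is_hermitian n (A : 'M[C]_n) : Prop := A ^t* = A.

Definition psdmx n (A : 'M[C]_n) : Prop :=
  is_hermitian A /\ forall x : 'cV[C]_n, 0 <= (x ^t* *m A *m x) 0 0.

Definition pdmx n (A : 'M[C]_n) : Prop :=
  is_hermitian A /\ forall x : 'cV[C]_n, x != 0 -> 0 < (x ^t* *m A *m x) 0 0.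

Definition loewner_le n (A B : 'M[C]_n) : Prop := psdmx (B - A).

Definition mx_sqrt n (A : 'M[C]_n) : 'M[C]_n :=
  epsilon (inhabits 0) (fun X : 'M[C]_n => psdmx X /\ X *m X = A).

Definition gmean n (A B : 'M[C]_n) : 'M[C]_n :=
  let Ah := mx_sqrt A in
  let Aih := invmx Ah in
  Ah *m mx_sqrt (Aih *m B *m Aih) *m Ah.

End Defs.

(* Main.v *)
Require Import Defs.
From HB Require Import structures.
From mathcomp Require Import all_boot all_order all_algebra.
From mathcomp Require Import sesquilinear spectral complex reals.
From mathcomp Require Import ring.
From Stdlib Require Import ClassicalEpsilon.
Set Implicit Arguments. Unset Strict Implicit. Unset Printing Implicit Defensive.
Import Order.TTheory GRing.Theory Num.Theory.
Local Open Scope ring_scope.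
Local Open Scope sesquilinear_scope.

Section Aux.
Variable C : numClosedFieldType.

Definition bf n (H : 'M[C]_n) (u w : 'cV[C]_n) : C := (u ^t* *m H *m w) 0 0.

Lemma ctmul m n p (A : 'M[C]_(m, n)) (B : 'M[C]_(n, p)) :
  (A *m B) ^t* = B ^t* *m A ^t*.
Proof. by rewrite trmx_mul map_mxM. Qed.

Lemma ctD m n (A B : 'M[C]_(m, n)) : (A + B) ^t* = A ^t* + B ^t*.
Proof. by rewrite linearD /= map_mxD. Qed.

Lemma ctN m n (A : 'M[C]_(m, n)) : (- A) ^t* = - A ^t*.
Proof. by rewrite linearN /= map_mxN. Qed.

Lemma ctZ m n c (A : 'M[C]_(m, n)) : (c *: A) ^t* = c^* *: A ^t*.
Proof. by rewrite linearZ /= map_mxZ. Qed.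

Lemma ct1 n : (1%:M : 'M[C]_n) ^t* = 1%:M.
Proof. by rewrite trmx1 map_mx1. Qed.

Lemma bfDl n (H K : 'M[C]_n) u w : bf (H + K) u w = bf H u w + bf K u w.
Proof. by rewrite /bf mulmxDr mulmxDl mxE. Qed.

Lemma bfNl n (H : 'M[C]_n) u w : bf (- H) u w = - bf H u w.
Proof. by rewrite /bf mulmxN mulNmx mxE. Qed.

Lemma bfDr n (H : 'M[C]_n) u w1 w2 : bf H u (w1 + w2) = bf H u w1 + bf H u w2.
Proof. by rewrite /bf mulmxDr mxE. Qed.

Lemma bfDm n (H : 'M[C]_n) u1 u2 w : bf H (u1 + u2) w = bf H u1 w + bf H u2 w.
Proof. by rewrite /bf ctD !mulmxDl mxE. Qed.

Lemma bfNr n (H : 'M[C]_n) u w : bf H u (- w) = - bf H u w.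
Proof. by rewrite /bf mulmxN mxE. Qed.

Lemma bfNm n (H : 'M[C]_n) u w : bf H (- u) w = - bf H u w.
Proof. by rewrite /bf ctN !mulNmx mxE. Qed.

Lemma bfZr n (H : 'M[C]_n) u c w : bf H u (c *: w) = c * bf H u w.
Proof. by rewrite /bf -scalemxAr mxE. Qed.

Lemma bfZm n (H : 'M[C]_n) c u w : bf H (c *: u) w = c^* * bf H u w.
Proof. by rewrite /bf ctZ -!scalemxAl mxE. Qed.

Lemma bfMr n (H K : 'M[C]_n) u w : bf (H *m K) u w = bf H u (K *m w).
Proof. by rewrite /bf !mulmxA. Qed.

Lemma bfMl n (H K : 'M[C]_n) u w : bf (K *m H) u w = bf H (K ^t* *m u) w.
Proof. by rewrite /bf ctmul trmxCK !mulmxA. Qed.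

Lemma bf_conj n (H : 'M[C]_n) u w : is_hermitian H -> (bf H u w)^* = bf H w u.
Proof.
move=> hH; rewrite /bf.
have -> : ((u ^t* *m H *m w) 0 0)^* = ((u ^t* *m H *m w) ^t*) 0 0 by rewrite !mxE.
by rewrite !ctmul trmxCK hH mulmxA.
Qed.

Lemma bf_ge0 m n (P : 'M[C]_(m, n)) x : 0 <= bf (P ^t* *m P) x x.
Proof.
rewrite /bf.
have -> : x ^t* *m (P ^t* *m P) *m x = (P *m x) ^t* *m (P *m x) by rewrite ctmul !mulmxA.
rewrite mxE; apply: sumr_ge0 => k _.
by rewrite !mxE mulrC mul_conjC_ge0.
Qed.


Lemma herm_spec n (H : 'M[C]_n) : is_hermitian H ->
  exists P : 'M[C]_n, exists d : 'rV[C]_n,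
    P \is unitarymx /\ H = P ^t* *m diag_mx d *m P.
Proof.
move=> hH.
have nH : H \is normalmx by apply/normalmxP; rewrite hH.
have := orthomx_spectralP nH => /= HE.
exists (spectralmx H), (spectral_diag H); split; first exact: spectral_unitarymx.
by rewrite [LHS]HE invmx_unitary // spectral_unitarymx.
Qed.

Lemma bf_diagE n (d : 'rV[C]_n) y :
  bf (diag_mx d) y y = \sum_k d 0 k * ((y k 0)^* * y k 0).
Proof.
rewrite /bf mul_mx_diag mxE; apply: eq_bigr => k _.
by rewrite !mxE mulrCA mulrA [_ * d 0 k]mulrC.
Qed.

Lemma bf_diag_ge0 n (d : 'rV[C]_n) y : (forall k, 0 <= d 0 k) ->
  0 <= bf (diag_mx d) y y.
Proof.
move=> hd; rewrite bf_diagE; apply: sumr_ge0 => k _.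
by rewrite mulr_ge0 // mulrC mul_conjC_ge0.
Qed.

Definition evec n (P : 'M[C]_n) (i : 'I_n) : 'cV[C]_n := P ^t* *m delta_mx i 0.

Lemma unit_evec n (P : 'M[C]_n) i : P \is unitarymx -> P *m evec P i = delta_mx i 0.
Proof. by move=> hP; rewrite /evec mulmxA (unitarymxP hP) mul1mx. Qed.

Lemma bf_conjug n (P D : 'M[C]_n) u w :
  bf (P ^t* *m D *m P) u w = bf D (P *m u) (P *m w).
Proof. by rewrite bfMr bfMl trmxCK. Qed.

Lemma bf_diag_delta n (d : 'rV[C]_n) i : bf (diag_mx d) (delta_mx i 0) (delta_mx i 0) = d 0 i.
Proof.
rewrite bf_diagE (bigD1 i) //= big1 ?addr0.
  by rewrite !mxE !eqxx /= conjC1 !mulr1.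
move=> k /negbTE hk; by rewrite !mxE hk /= !mulr0.
Qed.

Lemma bf_evec n (P : 'M[C]_n) d i : P \is unitarymx ->
  bf (P ^t* *m diag_mx d *m P) (evec P i) (evec P i) = d 0 i.
Proof. by move=> hP; rewrite bf_conjug unit_evec // bf_diag_delta. Qed.

Lemma bf1_evec n (P : 'M[C]_n) i : P \is unitarymx ->
  bf 1%:M (evec P i) (evec P i) = 1.
Proof.
move=> hP.
have E : P ^t* *m diag_mx (const_mx 1) *m P = 1%:M.
  have -> : diag_mx (const_mx 1) = 1%:M :> 'M[C]_n.
    by apply/matrixP => a b; rewrite !mxE.
  by rewrite mulmx1 -[P ^t*]mul1mx mulmxKtV.
by rewrite -E bf_evec // mxE.
Qed.

Lemma evec_eig n (P : 'M[C]_n) d i : P \is unitarymx ->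
  (P ^t* *m diag_mx d *m P) *m evec P i = d 0 i *: evec P i.
Proof.
move=> hP; rewrite -mulmxA unit_evec // -mulmxA /evec.
have -> : diag_mx d *m (delta_mx i 0 : 'cV[C]_n) = d 0 i *: (delta_mx i 0 : 'cV[C]_n).
  apply/matrixP => a b; rewrite mul_diag_mx !mxE.
  by case: (eqVneq a i) => [->|]; rewrite ?mulr1 ?mulr0.
by rewrite linearZ.
Qed.

Lemma psd_sqrt_ex n (H : 'M[C]_n) : psdmx H ->
  exists S, psdmx S /\ S *m S = H.
Proof.
move=> [hH qH]; have [P [d [uP HE]]] := herm_spec hH.
have dge0 : forall k, 0 <= d 0 k.
  by move=> k; rewrite -(bf_evec d k uP) -HE; apply: qH.
pose s : 'rV[C]_n := map_mx sqrtC d.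
have sge0 : forall k, 0 <= s 0 k by move=> k; rewrite mxE sqrtC_ge0.
exists (P ^t* *m diag_mx s *m P); split; [split|].
- rewrite /is_hermitian !ctmul trmxCK tr_diag_mx map_diag_mx mulmxA.
  congr (_ *m diag_mx _ *m _); apply/matrixP => a b; rewrite !mxE.
  by apply: geC0_conj; rewrite sqrtC_ge0 (ord1 a).
- by move=> x; rewrite -/(bf _ x x) bf_conjug; apply: bf_diag_ge0.
- rewrite HE -!mulmxA; congr (_ *m _); rewrite !mulmxA.
  rewrite mulmxtVK //; congr (_ *m _).
  apply/matrixP => a b; rewrite mul_diag_mx !mxE.
  case: (eqVneq a b) => [->|]; rewrite ?mulr1n ?mulr0n ?mulr0 //.
  by rewrite -expr2 sqrtCK.
Qed.

Lemma mx_sqrt_spec n (H : 'M[C]_n) : psdmx H ->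
  psdmx (mx_sqrt H) /\ mx_sqrt H *m mx_sqrt H = H.
Proof.
move=> pH; rewrite /mx_sqrt.
exact: (ClassicalEpsilon.epsilon_spec (inhabits 0) (fun X : 'M[C]_n => psdmx X /\ X *m X = H) (psd_sqrt_ex pH)).
Qed.


Lemma pd_psd n (M : 'M[C]_n) : pdmx M -> psdmx M.
Proof.
move=> [hM qM]; split => // x.
have [->|nx] := eqVneq x 0; last exact: ltW (qM x nx).
by rewrite mulmx0 mxE.
Qed.

Lemma pd_unit n (M : 'M[C]_n) : pdmx M -> M \in unitmx.
Proof.
move=> [hM qM]; rewrite -row_free_unit -kermx_eq0; apply/eqP/row_matrixP => i.
rewrite row0; set u := row i (kermx M).
have uM : u *m M = 0 by rewrite /u -row_mul mulmx_ker row0.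
have Mx : M *m u ^t* = 0 by rewrite -{1}hM -ctmul uM trmx0 map_mx0.
apply/eqP; apply/negPn/negP => nu.
have nx : u ^t* != 0.
  by apply: contra nu => /eqP h; rewrite -[u]trmxCK h trmx0 map_mx0.
by have := qM _ nx; rewrite -mulmxA Mx mulmx0 mxE ltxx.
Qed.

Lemma herm_inv n (A : 'M[C]_n) : is_hermitian A -> is_hermitian (invmx A).
Proof. by move=> hA; rewrite /is_hermitian trmx_inv map_invmx -/(A ^t*) hA. Qed.

Lemma bf_herm_conj n (P D : 'M[C]_n) u w : is_hermitian P ->
  bf (P *m D *m P) u w = bf D (P *m u) (P *m w).
Proof. by move=> hP; rewrite -{1}hP bf_conjug. Qed.

Lemma herm_conj n (P D : 'M[C]_n) : is_hermitian P -> is_hermitian D ->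
  is_hermitian (P *m D *m P).
Proof. by move=> hP hD; rewrite /is_hermitian !ctmul hP hD mulmxA. Qed.

Lemma bf_block n (P Q R S : 'M[C]_n) u1 v1 u2 v2 :
  bf (block_mx P Q R S) (col_mx u1 v1) (col_mx u2 v2) =
  bf P u1 u2 + bf Q u1 v2 + bf R v1 u2 + bf S v1 v2.
Proof.
rewrite /bf tr_col_mx map_row_mx mul_row_block mul_row_col.
rewrite !mulmxDl !mxE.
by rewrite !addrA; congr (_ + _); rewrite -!addrA; congr (_ + _); rewrite addrC.
Qed.


Lemma main_gm n (M N : 'M[C]_n) : pdmx M -> pdmx N ->
  is_hermitian (gmean M N) /\ psdmx (block_mx M (gmean M N) (gmean M N) N) /\
  (forall X A B, is_hermitian X -> loewner_le A M -> loewner_le B N ->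
     psdmx (block_mx A X X B) -> loewner_le X (gmean M N)).
Proof.
move=> pM pN; have psdM := pd_psd pM; have psdN := pd_psd pN.
have [hM _] := pM; have [hN _] := pN.
have [[hMh qMh] MhE] := mx_sqrt_spec psdM.
set Mh := mx_sqrt M in hMh qMh MhE.
have uMh : Mh \in unitmx by have := pd_unit pM; rewrite -MhE unitmx_mul => /andP[].
set Mi := invmx Mh.
have hMi : is_hermitian Mi by apply: herm_inv.
set W := Mi *m N *m Mi.
have psdW : psdmx W.
  split; first exact: herm_conj.
  by move=> x; rewrite -/(bf _ x x) bf_herm_conj //; case: psdN => _; apply.
have [[hY qY] YE] := mx_sqrt_spec psdW.
set Y := mx_sqrt W in hY qY YE.
have GE : gmean M N = Mh *m Y *m Mh by [].
rewrite GE.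
have hG : is_hermitian (Mh *m Y *m Mh) by apply: herm_conj.
split => //; split.
  set Q := row_mx Mh (Y *m Mh).
  have -> : block_mx M (Mh *m Y *m Mh) (Mh *m Y *m Mh) N = Q ^t* *m Q.
    rewrite /Q tr_row_mx map_col_mx -/(Mh ^t*) -/((Y *m Mh) ^t*) ctmul hMh hY.
    rewrite mul_col_row MhE !mulmxA; congr block_mx.
    rewrite -(mulmxA Mh Y Y) YE /W !mulmxA /Mi mulmxKV //.
    by rewrite mulmxV // mul1mx.
  split; last by move=> x; apply: bf_ge0.
  by rewrite /is_hermitian ctmul trmxCK.
move=> X A B hX [_ qMA] [_ qNB] [_ qblk].
set Z := Mi *m X *m Mi.
have hZ : is_hermitian Z by apply: herm_conj.
have MiM : Mi *m M *m Mi = 1%:M.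
  by rewrite -MhE /Mi !mulmxA mulVmx // mul1mx mulmxV.
have key : forall a c, 0 <= bf 1%:M a a + bf Z a c + bf Z c a + bf W c c.
  move=> a c.
  have h1 := qblk (col_mx (Mi *m a) (Mi *m c)); rewrite -/(bf _ _ _) bf_block in h1.
  have h2 := qMA (Mi *m a); rewrite -/(bf _ _ _) bfDl bfNl in h2.
  have h3 := qNB (Mi *m c); rewrite -/(bf _ _ _) bfDl bfNl in h3.
  rewrite -MiM /Z /W !bf_herm_conj //.
  have -> : bf M (Mi *m a) (Mi *m a) + bf X (Mi *m a) (Mi *m c) +
    bf X (Mi *m c) (Mi *m a) + bf N (Mi *m c) (Mi *m c) =
    (bf A (Mi *m a) (Mi *m a) + bf X (Mi *m a) (Mi *m c) +
    bf X (Mi *m c) (Mi *m a) + bf B (Mi *m c) (Mi *m c)) +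
    (bf M (Mi *m a) (Mi *m a) - bf A (Mi *m a) (Mi *m a)) +
    (bf N (Mi *m c) (Mi *m c) - bf B (Mi *m c) (Mi *m c)) by ring.
  by rewrite addr_ge0 // addr_ge0.
set H := Y - Z.
have hH : is_hermitian H by rewrite /is_hermitian /H ctD ctN hY hZ.
have [P [d [uP HE]]] := herm_spec hH.
have dge0 : forall k, 0 <= d 0 k.
  move=> k; set v := evec P k; set l := d 0 k.
  have bHv : bf H v v = l by rewrite HE bf_evec.
  have lR : l \is Num.real by apply/CrealP; rewrite -bHv bf_conj.
  apply/negPn/negP => nl.
  have lneg : l < 0 by rewrite real_ltNge.
  have Hv : H *m v = l *: v by rewrite HE evec_eig.
  have Zv : Z *m v = Y *m v - l *: v.
    by rewrite -Hv /H mulmxBl opprB addrC subrK.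
  have := key (- (Z *m v)) v.
  rewrite !(bfNm, bfNr) !opprK.
  have -> : bf Z (Z *m v) v = bf 1%:M (Z *m v) (Z *m v).
    by rewrite -(bfMr 1%:M Z) mul1mx.
  have -> : bf Z v (Z *m v) = bf 1%:M (Z *m v) (Z *m v).
    by rewrite -[Z as X in bf 1%:M (X *m v)]hZ -(bfMl 1%:M Z) mulmx1.
  have -> : bf W v v = bf 1%:M (Y *m v) (Y *m v).
    by rewrite -YE -[Y as X in bf 1%:M (X *m v)]hY -(bfMl 1%:M Y) mulmx1 -(bfMr Y Y).
  have YvV : bf 1%:M (Y *m v) v = bf Y v v.
    by rewrite -[Y as X in bf 1%:M (X *m v)]hY -(bfMl 1%:M Y) mulmx1.
  have VYv : bf 1%:M v (Y *m v) = bf Y v v by rewrite -(bfMr 1%:M Y) mul1mx.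
  rewrite Zv !(bfDm, bfDr, bfNm, bfNr, bfZm, bfZr) YvV VYv bf1_evec //.
  rewrite (conj_Creal lR).
  set q := bf Y v v; set y := bf 1%:M (Y *m v) (Y *m v).
  set E := y - l * q + (- (l * q) - l * - (l * 1)).
  have -> : E - E - E + y = (l * q + l * q) - l * l by rewrite /E; ring.
  move=> H0.
  have qge : 0 <= q by apply: qY.
  have h1 : l * q + l * q <= 0.
    by rewrite -[0]addr0 lerD // mulr_le0_ge0 // ltW.
  have h2 : 0 < l * l by rewrite nmulr_rgt0.
  have : l * q + l * q - l * l < 0 by rewrite subr_lt0 (le_lt_trans h1 h2).
  by move=> /(le_lt_trans H0); rewrite ltxx.
have psdH : forall y, 0 <= bf H y y.
  by move=> y; rewrite HE bf_conjug; apply: bf_diag_ge0.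
split.
  by rewrite /is_hermitian ctD ctN hG hX.
move=> x; rewrite -/(bf _ x x).
have -> : Mh *m Y *m Mh - X = Mh *m H *m Mh.
  rewrite /H mulmxBr mulmxBl; congr (_ - _).
  by rewrite /Z /Mi !mulmxA mulmxV // mul1mx mulmxKV.
by rewrite bf_herm_conj.
Qed.

End Aux.

Local Close Scope sesquilinear_scope.

Theorem proposition3p3 (R : realType) (n : nat)
  (S T : 'M[R[i]]_n -> Prop) (M N : 'M[R[i]]_n) :
  (forall A, S A -> pdmx A) -> (forall B, T B -> pdmx B) ->
  (exists A, S A) -> (exists B, T B) ->
  (forall A1 A2, S A1 -> S A2 -> loewner_le A1 A2 \/ loewner_le A2 A1) ->
  (forall B1 B2, T B1 -> T B2 -> loewner_le B1 B2 \/ loewner_le B2 B1) ->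
  S M -> (forall A, S A -> loewner_le A M) ->
  T N -> (forall B, T B -> loewner_le B N) ->
  let F := fun X : 'M[R[i]]_n =>
    is_hermitian X /\
    exists A B, S A /\ T B /\ psdmx (block_mx A X X B) in
  F (gmean M N) /\ (forall X, F X -> loewner_le X (gmean M N)).
Proof.
move=> pdS pdT _ _ _ _ SM Smax TN Tmax F.
have [hG [blk mx]] := main_gm (pdS _ SM) (pdT _ TN).
split; first by split => //; exists M, N.
move=> X [hX [A [B [SA [TB pb]]]]].
exact: mx hX (Smax _ SA) (Tmax _ TB) pb.
Qed.
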